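(* For every integer $S\ge1$, with $R=2S+1$, one has $\Vert T_R\Vert^2<\pi^2-\dfrac{6}{S+1}$. Moreover, for every integer $R\ge1$, $\pi-\Vert T_R\Vert\ge\dfrac{\pi}{2R}$.
   Context: $T_R$ is the $R\times R$ matrix with $(T_R)_{m,n}=0$ if $m=n$ and $(T_R)_{m,n}=\frac{1}{m-n}$ if $m\ne n$, $1\le m,n\le R$. $\Vert\cdot\Vert$ is the operator norm induced by the Euclidean norm. *)

(* Defs.v *)
From Stdlib Require Import Reals ClassicalEpsilon.
Open Scope R_scope.

Fixpoint fsum (n : nat) (f : nat -> R) : R :=
  match n with
  | O => 0
  | S k => fsum k f + f k
  end.

(* Vectors in R^R are functions nat -> R, coordinate i (0 <= i < R)
   standing for the paper's index m = i+1.  Since (i+1)-(j+1) = i-j, the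
   entries of T_R are: 0 on the diagonal, 1/(i-j) off the diagonal. *)
Definition T_entry (i j : nat) : R :=
  if Nat.eq_dec i j then 0 else / (INR i - INR j).

Definition applyT (Rd : nat) (x : nat -> R) (i : nat) : R :=
  fsum Rd (fun j => T_entry i j * x j).

Definition enorm (Rd : nat) (x : nat -> R) : R :=
  sqrt (fsum Rd (fun i => x i ^ 2)).

Definition opnorm_set (Rd : nat) : R -> Prop :=
  fun y => exists x : nat -> R, enorm Rd x = 1 /\ y = enorm Rd (applyT Rd x).

Definition opnormT (Rd : nat) : R :=
  epsilon (inhabits 0) (fun N => is_lub (opnorm_set Rd) N).

(* Main.v *)
Require Import Defs.
From Stdlib Require Import Reals.
From Stdlib Require Import Lra Lia Arith ClassicalEpsilon.
From Coquelicot Require Import Coquelicot.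
Open Scope R_scope.

Lemma fsum_ext n f g : (forall i, (i < n)%nat -> f i = g i) -> fsum n f = fsum n g.
Proof. induction n; simpl; intros H; [reflexivity|]. rewrite IHn by (intros; apply H; lia). rewrite H by lia. reflexivity. Qed.

Lemma fsum_plus n f g : fsum n (fun i => f i + g i) = fsum n f + fsum n g.
Proof. induction n; simpl; [ring|]. rewrite IHn; ring. Qed.

Lemma fsum_minus n f g : fsum n (fun i => f i - g i) = fsum n f - fsum n g.
Proof. induction n; simpl; [ring|]. rewrite IHn; ring. Qed.

Lemma fsum_scal n c f : fsum n (fun i => c * f i) = c * fsum n f.
Proof. induction n; simpl; [ring|]. rewrite IHn; ring. Qed.

Lemma fsum_mul n m f g : fsum n f * fsum m g = fsum n (fun j => fsum m (fun k => f j * g k)).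
Proof.
  induction n; simpl; [ring|]. rewrite <- IHn. rewrite Rmult_plus_distr_r. f_equal.
  rewrite <- fsum_scal. reflexivity.
Qed.

Lemma fsum_swap n m h : fsum n (fun j => fsum m (fun k => h j k)) = fsum m (fun k => fsum n (fun j => h j k)).
Proof.
  induction n; simpl.
  - induction m; simpl; [reflexivity|]. rewrite <- IHm. ring.
  - rewrite IHn. rewrite <- fsum_plus. reflexivity.
Qed.

Lemma fsum_nonneg n f : (forall i, (i < n)%nat -> 0 <= f i) -> 0 <= fsum n f.
Proof. induction n; simpl; intros H; [lra|]. assert (0 <= f n) by (apply H; lia).
  assert (0 <= fsum n f) by (apply IHn; intros; apply H; lia). lra. Qed.

Lemma fsum_le n f g : (forall i, (i < n)%nat -> f i <= g i) -> fsum n f <= fsum n g.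
Proof. induction n; simpl; intros H; [lra|]. assert (f n <= g n) by (apply H; lia).
  assert (fsum n f <= fsum n g) by (apply IHn; intros; apply H; lia). lra. Qed.

Lemma fsum_delta n j g : fsum n (fun k => g k * (if Nat.eq_dec j k then 1 else 0)) =
  if lt_dec j n then g j else 0.
Proof.
  induction n; simpl.
  - destruct (lt_dec j 0); [lia|reflexivity].
  - rewrite IHn. destruct (Nat.eq_dec j n) as [->|Hn].
    + destruct (lt_dec n n); [lia|]. destruct (lt_dec n (S n)); [ring|lia].
    + destruct (lt_dec j n), (lt_dec j (S n)); try lia; ring.
Qed.

Lemma cs_ineq n f : (fsum n f)^2 <= INR n * fsum n (fun i => f i ^ 2).
Proof.
  induction n; [simpl; lra|].
  change (fsum (S n) f) with (fsum n f + f n).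
  change (fsum (S n) (fun i => f i ^ 2)) with (fsum n (fun i => f i ^ 2) + f n ^ 2).
  rewrite S_INR.
  set (s := fsum n f) in *. set (q := fsum n (fun i => f i ^2)) in *.
  assert (Hq : 0 <= q) by (apply fsum_nonneg; intros; nra).
  set (a := f n) in *. set (N := INR n) in *.
  assert (HN : 0 <= N) by apply pos_INR.
  destruct (Req_dec N 0) as [H0|H0].
  - rewrite H0 in IHn |- *. assert (Hs2 : s^2 <= 0) by lra. assert (Hs : s = 0) by nra. rewrite Hs. nra.
  - assert (Hp : 0 < N) by lra.
    assert (N * ((N+1)*(q + a^2) - (s + a)^2) >= 0).
    { replace (N * ((N+1)*(q + a^2) - (s + a)^2)) with ((N+1)*(N*q - s^2) + (s - N*a)^2) by ring.
      assert (0 <= (s - N*a)^2) by apply pow2_ge_0. assert (0 <= (N+1)*(N*q - s^2)) by (apply Rmult_le_pos; lra). lra. }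
    set (X := (N+1)*(q + a^2) - (s + a)^2) in *.
    assert (X >= 0).
    { destruct (Rge_dec X 0); auto. exfalso. assert (N * X < 0) by (apply Rmult_pos_neg; lra). lra. }
    unfold X in *. lra.
Qed.


Definition Aj (u v : nat -> R) j k := u j * u k + v j * v k.
Definition Bj (u v : nat -> R) j k := u j * v k - v j * u k.
Definition nn j k := INR j - INR k.
Definition trm u v j k t := Aj u v j k * cos (nn j k * t) + Bj u v j k * sin (nn j k * t).
Definition ff Rd u v t := fsum Rd (fun j => fsum Rd (fun k => trm u v j k t)).
Definition pj (u v : nat -> R) t j := u j * cos (INR j * t) - v j * sin (INR j * t).
Definition qj (u v : nat -> R) t j := u j * sin (INR j * t) + v j * cos (INR j * t).

Lemma ff_PQ Rd u v t : ff Rd u v t = (fsum Rd (pj u v t))^2 + (fsum Rd (qj u v t))^2.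
Proof.
  assert (E: forall x, x^2 = x*x) by (intros; ring). rewrite !E. rewrite !fsum_mul. rewrite <- fsum_plus.
  unfold ff. apply fsum_ext; intros j _. rewrite <- fsum_plus. apply fsum_ext; intros k _.
  unfold trm, pj, qj, Aj, Bj, nn.
  replace ((INR j - INR k) * t) with (INR j * t - INR k * t) by ring.
  rewrite cos_minus, sin_minus. ring.
Qed.

Lemma ff_bounds Rd u v t : 0 <= ff Rd u v t <= INR Rd * fsum Rd (fun j => u j ^2 + v j ^2).
Proof.
  rewrite ff_PQ. split; [nra|].
  pose proof (cs_ineq Rd (pj u v t)). pose proof (cs_ineq Rd (qj u v t)).
  assert (fsum Rd (fun j => u j ^2 + v j ^2) = fsum Rd (fun i => pj u v t i ^ 2) + fsum Rd (fun i => qj u v t i ^ 2)).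
  { rewrite <- fsum_plus. apply fsum_ext; intros j _. unfold pj, qj.
    pose proof (sin2_cos2 (INR j * t)). unfold Rsqr in H1. nra. }
  rewrite H1. lra.
Qed.

Lemma is_derive_fsum n (g : nat -> R -> R) g' t :
  (forall i, is_derive (g i) t (g' i)) -> is_derive (fun t => fsum n (fun i => g i t)) t (fsum n g').
Proof.
  intros H. induction n; simpl.
  - apply is_derive_Reals. apply derivable_pt_lim_const.
  - apply (is_derive_plus (fun t => fsum n (fun i => g i t)) (g n)); auto.
Qed.

Definition G1 u v j k t :=
  if Nat.eq_dec j k then Aj u v j k * t
  else Aj u v j k * sin (nn j k * t) / nn j k - Bj u v j k * cos (nn j k * t) / nn j k.
Definition G2 u v j k t :=
  if Nat.eq_dec j k then Aj u v j k * (t^2/2)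
  else Aj u v j k * (t * sin (nn j k * t) / nn j k + cos (nn j k * t) / (nn j k)^2)
     + Bj u v j k * (- t * cos (nn j k * t) / nn j k + sin (nn j k * t) / (nn j k)^2).

Lemma nn_neq j k : j <> k -> nn j k <> 0.
Proof. intros H E. unfold nn in E. apply H. apply INR_eq. lra. Qed.

Lemma G1_der u v j k t : is_derive (G1 u v j k) t (trm u v j k t).
Proof.
  unfold G1, trm. destruct (Nat.eq_dec j k) as [<-|Hjk].
  - unfold nn. replace ((INR j - INR j) * t) with 0 by ring. rewrite cos_0, sin_0.
    auto_derive; auto; ring.
  - pose proof (nn_neq j k Hjk). set (n := nn j k) in *.
    auto_derive; auto. field. auto.
Qed.

Lemma G2_der u v j k t : is_derive (G2 u v j k) t (t * trm u v j k t).
Proof.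
  unfold G2, trm. destruct (Nat.eq_dec j k) as [<-|Hjk].
  - unfold nn. replace ((INR j - INR j) * t) with 0 by ring. rewrite cos_0, sin_0.
    auto_derive; auto; field.
  - pose proof (nn_neq j k Hjk). set (n := nn j k) in *.
    auto_derive; repeat split; auto. field. auto.
Qed.


Lemma trig_2PI j k : sin (nn j k * (2*PI)) = 0 /\ cos (nn j k * (2*PI)) = 1.
Proof.
  unfold nn. replace ((INR j - INR k) * (2*PI)) with ((0 + 2 * INR j * PI) - (0 + 2 * INR k * PI)) by ring.
  rewrite sin_minus, cos_minus, !sin_period, !cos_period, sin_0, cos_0. split; ring.
Qed.

Definition dl j k := if Nat.eq_dec j k then 1 else 0.

Lemma G1_delta u v j k : G1 u v j k (2*PI) - G1 u v j k 0 = 2*PI * Aj u v j k * dl j k.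
Proof.
  unfold G1, dl. destruct (Nat.eq_dec j k) as [<-|H]. - ring.
  - destruct (trig_2PI j k) as [Hs Hc]. rewrite Hs, Hc. replace (nn j k * 0) with 0 by ring. rewrite sin_0, cos_0.
    pose proof (nn_neq j k H). field. auto.
Qed.

Lemma G2_delta u v j k : G2 u v j k (2*PI) - G2 u v j k 0 =
  2*PI^2 * Aj u v j k * dl j k - 2*PI * Bj u v j k * T_entry j k.
Proof.
  unfold G2, dl, T_entry. destruct (Nat.eq_dec j k) as [<-|H]. - field.
  - destruct (trig_2PI j k) as [Hs Hc]. rewrite Hs, Hc. replace (nn j k * 0) with 0 by ring. rewrite sin_0, cos_0.
    pose proof (nn_neq j k H). unfold nn in *. field. auto.
Qed.

Definition F1 Rd u v t := fsum Rd (fun j => fsum Rd (fun k => G1 u v j k t)).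
Definition F2 Rd u v t := fsum Rd (fun j => fsum Rd (fun k => G2 u v j k t)).
Definition Nrm Rd (u v : nat -> R) := fsum Rd (fun j => u j ^2 + v j ^2).
Definition Wf Rd (u v : nat -> R) := fsum Rd (fun j => u j * applyT Rd v j).

Lemma diag_sum Rd u v c : fsum Rd (fun j => fsum Rd (fun k => c * Aj u v j k * dl j k)) = c * Nrm Rd u v.
Proof.
  unfold Nrm. rewrite <- fsum_scal. apply fsum_ext; intros j Hj.
  unfold dl. rewrite (fsum_delta Rd j (fun k => c * Aj u v j k)).
  destruct (lt_dec j Rd); [|lia]. unfold Aj. ring.
Qed.

Lemma F1_delta Rd u v : F1 Rd u v (2*PI) - F1 Rd u v 0 = 2*PI * Nrm Rd u v.
Proof.
  unfold F1. rewrite <- fsum_minus. rewrite <- diag_sum. apply fsum_ext; intros j _.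
  rewrite <- fsum_minus. apply fsum_ext; intros k _. apply G1_delta.
Qed.

Lemma BT_sum Rd u v : fsum Rd (fun j => fsum Rd (fun k => Bj u v j k * T_entry j k)) = 2 * Wf Rd u v.
Proof.
  unfold Wf, applyT.
  transitivity (fsum Rd (fun j => fsum Rd (fun k => u j * v k * T_entry j k)) -
                fsum Rd (fun j => fsum Rd (fun k => v j * u k * T_entry j k))).
  { rewrite <- fsum_minus. apply fsum_ext; intros j _. rewrite <- fsum_minus. apply fsum_ext; intros k _.
    unfold Bj. ring. }
  rewrite (fsum_swap Rd Rd (fun j k => v j * u k * T_entry j k)).
  assert (Hs : forall j k, T_entry k j = - T_entry j k).
  { intros j k. unfold T_entry. destruct (Nat.eq_dec k j), (Nat.eq_dec j k); try lia; try ring.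
    assert (INR j - INR k <> 0) by (intro E; apply n0; apply INR_eq; lra).
    field. split; auto. lra. }
  transitivity (2 * fsum Rd (fun j => fsum Rd (fun k => u j * v k * T_entry j k))).
  { rewrite <- !fsum_scal. rewrite <- fsum_minus. apply fsum_ext; intros j _.
    rewrite <- !fsum_scal. rewrite <- fsum_minus. apply fsum_ext; intros k _. rewrite Hs. ring. }
  f_equal. apply fsum_ext; intros j _. rewrite <- fsum_scal. apply fsum_ext; intros k _. ring.
Qed.

Lemma F2_delta Rd u v : F2 Rd u v (2*PI) - F2 Rd u v 0 = 2*PI^2 * Nrm Rd u v - 4 * PI * Wf Rd u v.
Proof.
  replace (4 * PI * Wf Rd u v) with (2 * PI * (2 * Wf Rd u v)) by ring.
  rewrite <- BT_sum, <- diag_sum, <- fsum_scal, <- fsum_minus.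
  unfold F2. rewrite <- fsum_minus. apply fsum_ext; intros j _.
  rewrite <- fsum_scal, <- !fsum_minus. apply fsum_ext; intros k _. rewrite G2_delta. ring.
Qed.

Lemma F1_der Rd u v t : is_derive (F1 Rd u v) t (ff Rd u v t).
Proof.
  unfold F1, ff. apply (is_derive_fsum Rd (fun j t => fsum Rd (fun k => G1 u v j k t))).
  intros j. apply (is_derive_fsum Rd (fun k t => G1 u v j k t)). intros k. apply G1_der.
Qed.

Lemma F2_der Rd u v t : is_derive (F2 Rd u v) t (t * ff Rd u v t).
Proof.
  unfold ff. rewrite <- fsum_scal.
  replace (fsum Rd (fun i => t * fsum Rd (fun k => trm u v i k t))) with
    (fsum Rd (fun i => fsum Rd (fun k => t * trm u v i k t))).
  2:{ apply fsum_ext; intros; apply fsum_scal. }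
  unfold F2. apply (is_derive_fsum Rd (fun j t => fsum Rd (fun k => G2 u v j k t))).
  intros j. apply (is_derive_fsum Rd (fun k t => G2 u v j k t)). intros k. apply G2_der.
Qed.

Lemma mono (H h : R -> R) p q : p <= q -> (forall t, is_derive H t (h t)) ->
  (forall t, p <= t <= q -> 0 <= h t) -> H p <= H q.
Proof.
  intros Hpq Hd Hpos. destruct (Req_dec p q) as [<-|Hne]; [lra|].
  destruct (MVT_cor2 H h p q) as [c [Hc Hc2]]; [lra| |].
  { intros c _. apply is_derive_Reals. apply Hd. }
  assert (0 <= h c) by (apply Hpos; lra). nra.
Qed.


Lemma keyK Rd u v : (1 <= Rd)%nat -> 2 * Wf Rd u v <= (PI - PI/INR Rd) * Nrm Rd u v.
Proof.
  intros HR.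
  assert (HRp : 1 <= INR Rd) by (apply (le_INR 1); lia).
  set (N := Nrm Rd u v).
  assert (HN : 0 <= N) by (apply fsum_nonneg; intros; nra).
  set (a := 2*PI/INR Rd). set (M := INR Rd * N).
  pose proof PI_RGT_0 as Hpi.
  assert (Ha : 0 < a) by (unfold a; apply Rdiv_lt_0_compat; lra).
  assert (Ha2 : a <= 2*PI).
  { unfold a. apply (Rmult_le_reg_r (INR Rd)); [lra|]. field_simplify; [|lra]. nra. }
  assert (Hb : forall t, 0 <= ff Rd u v t <= M) by (intros; unfold M, N, Nrm; apply ff_bounds).
  assert (H1 : F2 Rd u v 0 - a * F1 Rd u v 0 + M * (a*0 - 0^2/2) <=
               F2 Rd u v a - a * F1 Rd u v a + M * (a*a - a^2/2)).
  { apply (mono (fun t => F2 Rd u v t - a * F1 Rd u v t + M * (a*t - t^2/2))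
                (fun t => (a - t) * (M - ff Rd u v t))); [lra| |].
    - intros t.
      assert (E : (a - t) * (M - ff Rd u v t) = (t * ff Rd u v t - a * ff Rd u v t) + M * (a * 1 - (INR 2 * t ^ 1 * 1)/2)).
      { simpl. field. }
      rewrite E. apply (is_derive_plus (fun t => F2 Rd u v t - a * F1 Rd u v t) (fun t => M * (a*t - t^2/2))).
      + apply (is_derive_minus (F2 Rd u v) (fun t => a * F1 Rd u v t)). apply F2_der.
        apply (is_derive_scal (F1 Rd u v)). apply F1_der.
      + auto_derive; auto. change (INR 2) with (1+1). field.
    - intros t Ht. specialize (Hb t). apply Rmult_le_pos; lra. }
  assert (H2 : F2 Rd u v a - a * F1 Rd u v a <= F2 Rd u v (2*PI) - a * F1 Rd u v (2*PI)).
  { apply (mono (fun t => F2 Rd u v t - a * F1 Rd u v t) (fun t => (t - a) * ff Rd u v t)); [lra| |].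
    - intros t.
      assert (E : (t - a) * ff Rd u v t = t * ff Rd u v t - a * ff Rd u v t) by ring.
      rewrite E. apply (is_derive_minus (F2 Rd u v) (fun t => a * F1 Rd u v t)). apply F2_der.
      apply (is_derive_scal (F1 Rd u v)). apply F1_der.
    - intros t Ht. specialize (Hb t). apply Rmult_le_pos; lra. }
  pose proof (F1_delta Rd u v) as D1. pose proof (F2_delta Rd u v) as D2. fold N in D1, D2.
  assert (Hsum : 0 <= 2*PI^2*N - 4*PI*Wf Rd u v - a * (2*PI*N) + M * (a^2/2)).
  { replace (2*PI^2*N - 4*PI*Wf Rd u v - a * (2*PI*N) + M * (a^2/2)) with
      ((F2 Rd u v (2*PI) - a * F1 Rd u v (2*PI)) - (F2 Rd u v 0 - a * F1 Rd u v 0) + M * (a^2/2)).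
    2:{ rewrite <- D1, <- D2. ring. }
    assert (E0 : M * (a*0 - 0^2/2) = 0) by (simpl; rewrite !Rmult_0_r, !Rmult_0_l; unfold Rdiv; rewrite Rmult_0_l, Rminus_0_r, Rmult_0_r; reflexivity).
    assert (Ea : M * (a*a - a^2/2) = M*(a^2/2)) by (clearbody M a; field). lra. }
  unfold M, a in Hsum.
  assert (E2 : 2*PI^2*N - 4*PI*Wf Rd u v - 2*PI/INR Rd * (2*PI*N) + INR Rd * N * ((2*PI/INR Rd)^2/2)
           = 2*PI * ((PI - PI/INR Rd) * N - 2 * Wf Rd u v)) by (field; lra).
  rewrite E2 in Hsum.
  assert (0 <= (PI - PI/INR Rd) * N - 2 * Wf Rd u v).
  { apply (Rmult_le_reg_l (2*PI)); lra. }
  lra.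
Qed.


Lemma op_bound Rd x : (1 <= Rd)%nat ->
  fsum Rd (fun i => applyT Rd x i ^2) <= (PI - PI/INR Rd)^2 * fsum Rd (fun i => x i ^2).
Proof.
  intros HR.
  assert (HRp : 1 <= INR Rd) by (apply (le_INR 1); lia).
  pose proof PI_RGT_0 as Hpi.
  set (c := PI - PI/INR Rd).
  assert (Hc : 0 <= c).
  { unfold c. assert (PI / INR Rd <= PI).
    { apply (Rmult_le_reg_r (INR Rd)); [lra|]. field_simplify; [|lra]. nra. } lra. }
  set (a := fsum Rd (fun i => applyT Rd x i ^2)). set (b := fsum Rd (fun i => x i ^2)).
  assert (Ha : 0 <= a) by (apply fsum_nonneg; intros; nra).
  assert (Hb : 0 <= b) by (apply fsum_nonneg; intros; nra).
  assert (K : forall l, 2 * (l * a) <= c * (a + l^2 * b)).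
  { intros l. pose proof (keyK Rd (applyT Rd x) (fun k => l * x k) HR) as K.
    assert (EW : Wf Rd (applyT Rd x) (fun k => l * x k) = l * a).
    { unfold Wf, a. rewrite <- fsum_scal. apply fsum_ext; intros j _.
      assert (applyT Rd (fun k => l * x k) j = l * applyT Rd x j).
      { unfold applyT. rewrite <- fsum_scal. apply fsum_ext; intros; ring. }
      rewrite H. ring. }
    assert (EN : Nrm Rd (applyT Rd x) (fun k => l * x k) = a + l^2 * b).
    { unfold Nrm, a, b. rewrite <- fsum_scal, <- fsum_plus. apply fsum_ext; intros; ring. }
    rewrite EW, EN in K. exact K. }
  destruct (Rlt_dec 0 c) as [Hcp|Hc0].
  - specialize (K c). assert (c * a <= c * (c^2 * b)) by nra.
    apply (Rmult_le_reg_l c); [lra|]. lra.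
  - assert (c = 0) by lra. specialize (K 1). rewrite H in K |- *. nra.
Qed.

Definition e0 (i : nat) : R := if Nat.eq_dec i 0 then 1 else 0.

Lemma e0_sum n : fsum (S n) (fun i => e0 i ^2) = 1.
Proof.
  induction n. - simpl. unfold e0. simpl. ring.
  - change (fsum (S (S n)) (fun i => e0 i ^2)) with (fsum (S n) (fun i => e0 i ^2) + e0 (S n) ^2).
    rewrite IHn. unfold e0. simpl. ring.
Qed.

Lemma opnorm_props Rd : (1 <= Rd)%nat -> 0 <= opnormT Rd <= PI - PI / INR Rd.
Proof.
  intros HR.
  assert (HRp : 1 <= INR Rd) by (apply (le_INR 1); lia).
  pose proof PI_RGT_0 as Hpi.
  set (c := PI - PI/INR Rd).
  assert (Hc : 0 <= c).
  { unfold c. assert (PI / INR Rd <= PI).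
    { apply (Rmult_le_reg_r (INR Rd)); [lra|]. field_simplify; [|lra]. nra. } lra. }
  assert (Hub : is_upper_bound (opnorm_set Rd) c).
  { intros y [x [Hx Hy]]. rewrite Hy. unfold enorm in *.
    assert (Hb : 0 <= fsum Rd (fun i => x i ^2)) by (apply fsum_nonneg; intros; nra).
    assert (Hb1 : fsum Rd (fun i => x i ^2) = 1).
    { rewrite <- (sqrt_sqrt _ Hb). rewrite Hx. ring. }
    pose proof (op_bound Rd x HR) as Hop. fold c in Hop. rewrite Hb1 in Hop.
    rewrite <- (sqrt_pow2 c Hc). apply sqrt_le_1_alt. lra. }
  assert (Hin : opnorm_set Rd (enorm Rd (applyT Rd e0))).
  { exists e0. split; auto. unfold enorm. destruct Rd as [|n]; [lia|]. rewrite e0_sum. apply sqrt_1. }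
  assert (Hex : exists m, is_lub (opnorm_set Rd) m).
  { destruct (completeness (opnorm_set Rd)) as [m Hm].
    - exists c. exact Hub.
    - eexists; exact Hin.
    - exists m; exact Hm. }
  pose proof (epsilon_spec (inhabits 0) (fun N => is_lub (opnorm_set Rd) N) Hex) as Hl.
  fold (opnormT Rd) in Hl.
  destruct Hl as [Hl1 Hl2]. split.
  - apply Rle_trans with (enorm Rd (applyT Rd e0)). unfold enorm; apply sqrt_pos. apply Hl1. exact Hin.
  - apply Hl2. exact Hub.
Qed.

Lemma PI_gt_28 : 2.8 < PI.
Proof.
  destruct (PI_ineq 1) as [H _].
  unfold tg_alt, PI_tg in H. simpl in H.
  replace (1+1)%R with 2 in H by ring.
  lra.
Qed.

Theorem mainTheorem14 :
  (forall S : nat, (1 <= S)%nat ->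
     (opnormT (2 * S + 1)) ^ 2 < PI ^ 2 - 6 / (INR S + 1)) /\
  (forall Rd : nat, (1 <= Rd)%nat ->
     PI - opnormT Rd >= PI / (2 * INR Rd)).
Proof.
  split.
  - intros S HS. destruct (opnorm_props (2*S+1) ltac:(lia)) as [H0 H1].
    rewrite plus_INR, mult_INR in H1. simpl (INR 2) in H1. simpl (INR 1) in H1.
    assert (Hr : 1 <= INR S) by (apply (le_INR 1); lia).
    pose proof PI_gt_28 as Hp.
    set (r := INR S) in *. set (L := opnormT (2*S+1)) in *.
    replace (PI - PI / ((1+1) * r + 1)) with (PI * (2*r) / (2*r+1)) in H1 by (field; lra).
    assert (HL2 : L^2 <= (PI * (2*r) / (2*r+1))^2) by (apply pow_incr; lra).
    assert (Hp2 : 7.84 < PI^2) by nra.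
    assert (HX : 0 < (4*r+1)*(r+1)) by nra.
    assert (key : 6*(2*r+1)^2 < PI^2*(4*r+1)*(r+1)).
    { assert (7.84 * ((4*r+1)*(r+1)) < PI^2 * ((4*r+1)*(r+1))) by (apply Rmult_lt_compat_r; lra).
      nra. }
    assert (E : PI^2 - 6/(r+1) - (PI * (2*r) / (2*r+1))^2 =
                (PI^2*(4*r+1)*(r+1) - 6*(2*r+1)^2) / ((2*r+1)^2*(r+1))) by (field; lra).
    assert (0 < (PI^2*(4*r+1)*(r+1) - 6*(2*r+1)^2) / ((2*r+1)^2*(r+1))).
    { apply Rdiv_lt_0_compat; [lra|]. apply Rmult_lt_0_compat; nra. }
    lra.
  - intros Rd HR. destruct (opnorm_props Rd HR) as [H0 H1].
    assert (HRp : 1 <= INR Rd) by (apply (le_INR 1); lia).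
    pose proof PI_RGT_0 as Hpi.
    replace (PI / (2 * INR Rd)) with ((PI / INR Rd) / 2) by (field; lra).
    assert (0 < PI / INR Rd) by (apply Rdiv_lt_0_compat; lra). lra.
Qed.
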